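(* For every class of graphs $\mathcal{G}$, $\operatorname{rtw}(\widehat{\mathcal{G}})\leq \max(\operatorname{rtw}(\mathcal{G}),1)$.
   Context: A class of graphs is a collection of graphs closed under isomorphism. For a class $\mathcal{G}$, $\widehat{\mathcal{G}}$ denotes the class of graphs $G$ for which there exists a set $Z\subseteq V(G)$ of vertices each of degree exactly $1$ in $G$ such that $G-Z\in\mathcal{G}$. The strong product $H\boxtimes P$ has vertex set $V(H)\times V(P)$, distinct pairs adjacent if adjacent or equal in each coordinate. The row treewidth $\operatorname{rtw}(G)$ of a graph $G$ is the minimum $b$ such that there is a graph $H$ with treewidth at most $b$ and a path $P$ with $G$ isomorphic to a subgraph of $H\boxtimes P$. The row treewidth $\operatorname{rtw}(\mathcal{G})$ of a class is the maximum row treewidth of a graph in $\mathcal{G}$, or $\infty$ if no maximum exists. *)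

(* Defs.v *)
From mathcomp Require Import all_boot.
Set Implicit Arguments. Unset Strict Implicit. Unset Printing Implicit Defensive.

Record graph := Graph {
  gV : finType;
  gE : rel gV;
  gE_sym : symmetric gE;
  gE_irr : irreflexive gE }.

Definition isomorphic (G G' : graph) : Prop :=
  exists f : gV G -> gV G', bijective f /\ forall x y, gE x y = gE (f x) (f y).

Definition graph_class (C : graph -> Prop) : Prop :=
  forall G G', isomorphic G G' -> C G -> C G'.

Section Delete.
Variables (G : graph) (Z : {set gV G}).
Definition del_V := {x : gV G | x \notin Z}.
Definition del_E : rel del_V := fun x y => gE (val x) (val y).
Lemma del_E_sym : symmetric del_E.
Proof. by move=> x y; rewrite /del_E gE_sym. Qed.
Lemma del_E_irr : irreflexive del_E.
Proof. by move=> x; rewrite /del_E gE_irr. Qed.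
Definition delete_vertices : graph := Graph del_E_sym del_E_irr.
End Delete.

Definition degree (G : graph) (v : gV G) : nat := #|[set w | gE v w]|.

Definition hat_class (C : graph -> Prop) (G : graph) : Prop :=
  exists Z : {set gV G}, (forall z, z \in Z -> degree z = 1) /\ C (delete_vertices Z).

Definition is_tree (T : graph) : Prop :=
  0 < #|gV T| /\
  (forall x y : gV T, connect (@gE T) x y) /\
  (forall c : seq (gV T), uniq c -> 2 < size c -> ~~ cycle (@gE T) c).

Definition connected_in (T : graph) (S : {set gV T}) : Prop :=
  forall x y, x \in S -> y \in S ->
    connect [rel u v | [&& gE u v, u \in S & v \in S]] x y.

Definition tree_decomposition (G T : graph) (B : gV T -> {set gV G}) : Prop :=
  is_tree T /\
  (forall v : gV G, exists t, v \in B t) /\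
  (forall v w : gV G, gE v w -> exists t, (v \in B t) && (w \in B t)) /\
  (forall v : gV G, connected_in [set t | v \in B t]).

Definition tw_le (G : graph) (b : nat) : Prop :=
  exists (T : graph) (B : gV T -> {set gV G}),
    tree_decomposition B /\ forall t, #|B t| <= b.+1.

Definition path_rel (n : nat) : rel 'I_n.+1 :=
  fun i j => (i.+1 == j :> nat) || (j.+1 == i :> nat).

Definition strong_rel (H : graph) (n : nat) : rel (gV H * 'I_n.+1) :=
  fun p q => [&& p != q, (p.1 == q.1) || gE p.1 q.1 & (p.2 == q.2) || path_rel p.2 q.2].

Definition subgraph_of (G : graph) (U : Type) (e : rel U) : Prop :=
  exists f : gV G -> U, injective f /\ forall x y, gE x y -> e (f x) (f y).

Definition rtw_le (G : graph) (b : nat) : Prop :=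
  exists (H : graph) (n : nat), tw_le H b /\ subgraph_of G (@strong_rel H n).

Definition class_rtw_le (C : graph -> Prop) (b : nat) : Prop :=
  forall G, C G -> rtw_le G b.

(* Main.v *)
Require Import Defs.
From mathcomp Require Import all_boot.
Set Implicit Arguments. Unset Strict Implicit. Unset Printing Implicit Defensive.

Lemma connect_homo (A B : finType) (e : rel A) (e' : rel B) (f : A -> B) :
  (forall a b, e a b -> e' (f a) (f b)) -> forall x y, connect e x y -> connect e' (f x) (f y).
Proof.
move=> H x y /connectP [q pq ->]; elim: q x pq => [|a q IH] x /=; first by rewrite connect0.
case/andP=> exa pq; exact: connect_trans (connect1 (H _ _ exa)) (IH _ pq).
Qed.

Section Ext.
Variables (T : graph) (X : finType) (p : X -> gV T).
Definition ext_E : rel (gV T + X) := fun u v => match u, v with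
 | inl a, inl b => gE a b | inl a, inr x => p x == a | inr x, inl a => p x == a | _, _ => false end.
Lemma ext_sym : symmetric ext_E.
Proof. by case=> [a|x] [b|y] //=; apply: gE_sym. Qed.
Lemma ext_irr : irreflexive ext_E.
Proof. by case=> [a|x] //=; apply: gE_irr. Qed.
Definition ext_graph := Graph ext_sym ext_irr.

Definition getl (u : gV T + X) := if u is inl a then Some a else None.

Lemma ext_tree : is_tree T -> is_tree ext_graph.
Proof.
case=> [ne [conn acyc]]; split; [|split].
- by rewrite /= card_sum ltn_addr.
- have cl a b : connect ext_E (inl a) (inl b).
    exact: (connect_homo (f:=inl) (fun _ _ h => h) (conn a b)).
  have cr x : connect ext_E (inr x) (inl (p x)) by apply: connect1 => /=.
  have sy := sym_connect_sym ext_sym.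
  move=> [a|x] [b|y] /=.
  + exact: cl.
  + by rewrite sy; apply: connect_trans (cr y) (cl _ _).
  + exact: connect_trans (cr x) (cl _ _).
  + by apply: connect_trans (cr x) _; rewrite sy; apply: connect_trans (cr y) (cl _ _).
- move=> c uc sc.
  case: (boolP (has (fun u => if u is inr _ then true else false) c)).
  + case/hasP=> [[a|x]] // xc _; apply/negP=> cyc.
    case: (rot_to xc) => i s rs.
    have cy : cycle ext_E (inr x :: s) by rewrite -rs rot_cycle.
    have us : uniq (inr x :: s) by rewrite -rs rot_uniq.
    have ss : 2 < size (inr x :: s) by rewrite -rs size_rot.
    move: s rs cy us ss => [|u1 [|u2 s']] // _.
    rewrite /= rcons_path /= => /and4P [e1 _ _ e2] /and4P [_ nu1 _ _] _.
    move: (mem_last u2 s') nu1 e1 e2.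
    case: u1 => [a1|//] /=; case: (last u2 s') => [a2|//] /= hin nin /eqP e1 /eqP e2.
    by move: nin; rewrite -e1 e2 hin.
  + rewrite -all_predC => allc.
    have ec : c = map inl (pmap getl c).
      by elim: c allc {uc sc} => [|[a|x] c IH] //= h; rewrite -IH.
    move: uc sc; rewrite ec cycle_map (map_inj_uniq (fun a b (h : inl a = inl b) => ltac:(by case: h))) size_map => uc sc.
    exact: acyc uc sc.
Qed.
End Ext.

Lemma strong_sym (K : graph) (m : nat) : symmetric (@strong_rel K m).
Proof.
have ps (i j : 'I_m.+1) : path_rel i j = path_rel j i by rewrite /path_rel orbC.
move=> p q; rewrite /strong_rel eq_sym [q.1 == p.1]eq_sym [q.2 == p.2]eq_sym gE_sym ps.
done.
Qed.

Lemma inl_eqE (A B : eqType) (a b : A) : (inl a == inl b :> A + B) = (a == b).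
Proof. by apply/eqP/eqP => [[]|->]. Qed.

Lemma inr_eqE (A B : eqType) (a b : B) : (inr a == inr b :> A + B) = (a == b).
Proof. by apply/eqP/eqP => [[]|->]. Qed.

Section Main.
Variables (G : graph) (Z : {set gV G}).
Hypothesis hZ : forall z, z \in Z -> degree z = 1.
Variables (H : graph) (n : nat) (f : gV (delete_vertices Z) -> gV H * 'I_n.+1).
Hypothesis finj : injective f.
Hypothesis fE : forall x y, gE x y -> strong_rel (f x) (f y).

Definition nb (z : gV G) : option (gV G) := [pick w | gE z w].

Lemma nb_some z y : nb z = Some y -> gE z y.
Proof. by rewrite /nb; case: pickP => // w hw [<-]. Qed.

Lemma nb_unique z y : z \in Z -> gE z y -> nb z = Some y.
Proof.
move=> zZ zy; have /cards1P [w hw] : #|[set w | gE z w]| == 1 by rewrite -/(degree z) hZ.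
have yw : y = w by apply/set1P; rewrite -hw inE.
rewrite /nb; case: pickP => [w' hw'|no]; last by move: (no y); rewrite zy.
by congr Some; apply/set1P; rewrite yw -hw inE.
Qed.

Definition anchor (z : gV G) : option (gV H) :=
  if z \in Z then obind (fun y => omap (fun y' : del_V Z => (f y').1) (insub y)) (nb z) else None.

Definition row (z : gV G) : 'I_n.+1 :=
  if nb z is Some y then (if (insub y : option (del_V Z)) is Some y' then (f y').2 else ord0) else ord0.

Definition owner (z : gV G) : gV G :=
  if nb z is Some y then (if [&& z \in Z, y \in Z & (enum_rank y < enum_rank z)%N] then y else z) else z.

Definition VH := (gV H + gV G)%type.
Definition EH : rel VH := fun u v => match u, v with
  | inl a, inl b => gE a b
  | inl a, inr z => anchor z == Some a
  | inr z, inl a => anchor z == Some a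
  | inr z, inr y => (z != y) && (owner z == owner y) end.
Lemma EH_sym : symmetric EH.
Proof. by case=> [a|z] [b|y] //=; [apply: gE_sym| rewrite eq_sym [owner y == _]eq_sym]. Qed.
Lemma EH_irr : irreflexive EH.
Proof. by case=> [a|z] //=; [apply: gE_irr| rewrite eqxx]. Qed.
Definition H' := Graph EH_sym EH_irr.

Definition g (z : gV G) : gV H' * 'I_n.+1 :=
  match (insub z : option (del_V Z)) with Some w => (inl (f w).1, (f w).2) | None => (inr z, row z) end.

Lemma g_inj : injective g.
Proof.
move=> x y; rewrite /g.
case: insubP => [w _ <-|_]; case: insubP => [w' _ <-|_] //.
- by case=> e1 e2; congr val; apply: finj; move: e1 e2; case: (f w) => ? ?; case: (f w') => ? ? /= -> ->.
- by case.
Qed.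

Lemma g_edge x y : gE x y -> strong_rel (g x) (g y).
Proof.
wlog h : x y / ~~ ((x \notin Z) && (y \in Z)).
  move=> W xy; case: (boolP ((x \notin Z) && (y \in Z))) => c; last exact: W.
  rewrite strong_sym; apply: W; last by rewrite gE_sym.
  by case/andP: c => _ ->.
move=> xy; rewrite /g.
case: insubP => [w xZ wx|xZ]; case: insubP => [w' yZ wy|yZ].
- have e : @gE (delete_vertices Z) w w' by rewrite /= /del_E wx wy.
  move: (fE e); case: (f w) => [a i]; case: (f w') => [a' i']; rewrite /strong_rel /=.
  by rewrite !xpair_eqE !inl_eqE.
- by move: h; rewrite xZ (negbNE yZ).
- have ny : nb x = Some (val w') by apply: nb_unique; rewrite ?wy //; move: xZ; rewrite negbK.
  rewrite /strong_rel /= /anchor /row ny valK (negbNE xZ) /= !eqxx /= ?orbT ?andbT.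
  by rewrite (_ : insub (sval w') = Some w') //; exact: valK.
- have xZ' := negbNE xZ; have yZ' := negbNE yZ.
  have yx : gE y x by rewrite gE_sym.
  rewrite /row (nb_unique xZ' xy) (nb_unique yZ' yx) !insubF ?yZ' ?xZ' //.
  rewrite /strong_rel /=.
  have nxy : x != y by apply: contraTneq xy => ->; rewrite gE_irr.
  apply/and3P; split => //.
    by rewrite xpair_eqE inr_eqE (negbTE nxy).
  apply/orP; right; rewrite nxy /owner (nb_unique xZ' xy) (nb_unique yZ' yx) xZ' yZ' /=.
  case: (ltngtP (enum_rank y) (enum_rank x)) => // e.
  by move: nxy; rewrite (enum_rank_inj (val_inj e)) eqxx.
Qed.



Lemma anchor_owner z a : anchor z = Some a -> owner z = z.
Proof.
rewrite /anchor /owner; case: ifP => // zZ; case: (nb z) => //= y.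
by case: insubP => //= u yZ _ _; rewrite (negbTE yZ).
Qed.

Lemma anchor_Z z a : anchor z = Some a -> z \in Z.
Proof. by rewrite /anchor; case: ifP. Qed.

Variables (b : nat) (T : graph) (B : gV T -> {set gV H}).
Hypothesis tdB : tree_decomposition B.
Hypothesis bB : forall t, #|B t| <= b.+1.
Variable t0 : gV T.

Definition pa (z : gV G) : gV T :=
  if anchor z is Some a then odflt t0 [pick t | a \in B t] else t0.

Lemma pa_spec z a : anchor z = Some a -> a \in B (pa z).
Proof.
rewrite /pa => ->; case: pickP => [t //|no].
case: tdB => _ [cov _]; case: (cov a) => t ht; by move: (no t); rewrite ht.
Qed.

Definition T' := ext_graph pa.

Definition B' (u : gV T') : {set gV H'} :=
  match u with
  | inl t => inl @: B t
  | inr w => [set v : gV H' | match v with inl a => anchor w == Some a | inr z => owner z == w end]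
  end.

Definition u0 (w : gV G) : gV H' :=
  if anchor w is Some a then inl a else if nb w is Some y then inr y else inr w.

Lemma B'_width u : #|B' u| <= (maxn b 1).+1.
Proof.
case: u => [t|w] /=.
  by apply: leq_trans (leq_imset_card _ _) _; apply: leq_trans (bB t) _; rewrite ltnS leq_maxl.
apply: (@leq_trans #|[set u0 w; inr w]|); last first.
  by rewrite cards2; case: (_ != _) => //; rewrite ltnS leq_maxr.
apply: subset_leq_card; apply/subsetP => v; rewrite inE !inE.
case: v => [a|z].
  by move/eqP=> e; rewrite /u0 e eqxx.
rewrite /owner; case nz: (nb z) => [y|]; last by move/eqP->; rewrite eqxx orbT.
case: ifP => [/and3P [zZ yZ _] /eqP <-|_ /eqP ->]; last by rewrite eqxx orbT.
have zy := nb_some nz.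
have ny : nb y = Some z by apply: nb_unique; rewrite // gE_sym.
have ay : anchor y = None by rewrite /anchor yZ ny /= insubF // zZ.
by rewrite /u0 ay ny eqxx.
Qed.

Lemma inr_notin_imset z (A : {set gV H}) : (inr z : gV H') \in inl @: A = false.
Proof. by apply/negP; case/imsetP. Qed.

Lemma inl_mem a (A : {set gV H}) : (inl a : gV H') \in inl @: A = (a \in A).
Proof. by rewrite mem_imset // => ? ? []. Qed.

Lemma B'_td : tree_decomposition B'.
Proof.
case: tdB => treeT [cov [edg con]].
split; first exact: ext_tree.
split.
  case=> [a|z].
    by case: (cov a) => t ht; exists (inl t); rewrite /= inl_mem.
  by exists (inr (owner z)); rewrite /= inE.
split.
  case=> [a|z] [c|y] /=.
  - by case/edg => t ht; exists (inl t); rewrite /= !inl_mem.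
  - move=> /eqP e; exists (inr y); by rewrite /= !inE e (anchor_owner e) !eqxx.
  - move=> /eqP e; exists (inr z); by rewrite /= !inE e (anchor_owner e) !eqxx.
  - by case/andP=> _ /eqP e; exists (inr (owner z)); rewrite /= !inE e eqxx.
case=> [h|z]; last first.
  have one x : x \in [set t : gV T' | inr z \in B' t] -> x = inr (owner z).
    rewrite inE; case: x => [t|w] /=; first by rewrite inr_notin_imset.
    by rewrite inE => /eqP ->.
  by move=> x y /one -> /one ->; apply: connect0.
rewrite /connected_in.
set S := [set t : gV T' | inl h \in B' t].
have memL t : ((inl t : gV T') \in S) = (h \in B t) by rewrite inE /= inl_mem.
have memR w : ((inr w : gV T') \in S) = (anchor w == Some h) by rewrite inE /= inE.
pose R := [rel u v : gV T' | [&& gE u v, u \in S & v \in S]].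
rewrite -/R.
have Rsym : connect_sym R.
  by apply: sym_connect_sym => u v /=; rewrite ext_sym; congr andb; apply: andbC.
have L t t' : h \in B t -> h \in B t' -> connect R (inl t) (inl t').
  move=> h1 h2.
  apply: (connect_homo (e := [rel u v | [&& gE u v, u \in [set t | h \in B t] & v \in [set t | h \in B t]]]) (f := inl)); last by apply: con; rewrite inE.
  by move=> u v /= /and3P [e hu hv]; rewrite /= e !memL -!(in_set (fun t => h \in B t)) hu hv.
have K u : u \in S -> exists2 t, h \in B t & connect R u (inl t).
  case: u => [t|w]; first by rewrite memL => ht; exists t => //; apply: connect0.
  rewrite memR => /eqP e; exists (pa w); first exact: pa_spec e.
  by apply: connect1; rewrite /= eqxx memR memL e eqxx (pa_spec e).
move=> x y xS yS.
case: (K x xS) => t ht cx; case: (K y yS) => t' ht' cy.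
apply: connect_trans cx _; apply: connect_trans (L _ _ ht ht') _; by rewrite Rsym.
Qed.


End Main.

Theorem mainTheorem3 (C : graph -> Prop) :
  graph_class C ->
  forall b : nat, class_rtw_le C b -> class_rtw_le (hat_class C) (maxn b 1).
Proof.
move=> _ b hC G [Z [hZ CG]].
case: (hC _ CG) => H [n [[T [B [tdB bB]]] [f [finj fE]]]].
have [t0 _] : exists t0 : gV T, true.
  by case: tdB => [[ne _] _]; case/card_gt0P: ne => t _; exists t.
exists (H' f), n; split.
  exists (T' f B t0), (fun u : gV (T' f B t0) => B' u); split; [exact: B'_td | exact: B'_width].
exists (g f); split; [exact: g_inj | exact: g_edge].
Qed.
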